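(* Let $f$ be a piecewise expanding unimodal map. Then there exists $\epsilon>0$ such that $f$ is $\epsilon$-expansive. If furthermore $f$ is good, then there exists $\epsilon>0$ such that $f$ is stably $\epsilon$-expansive.
   Context: Let $I=[-1,1]$ and $c=0$. $\mathcal B^1(I)$ is the Banach space of continuous $f:I\to\mathbb R$ that are $C^1$ on $[-1,0]$ and on $[0,1]$ with $f(1)=f(-1)$, normed by $|f|_1=\max\{|f|_{C^1[-1,0]},|f|_{C^1[0,1]}\}$ where $|f|_{C^1(Q)}=\max(\sup_Q|f|,\sup_Q|Df|)$. A piecewise expanding unimodal map is an $f\in\mathcal B^1(I)$ with $f(-1)=f(1)=-1$, $\inf_{x\in[-1,0]}Df(x)>1$, $\sup_{x\in[0,1]}Df(x)<-1$ and $f(0)\le1$. Such $f$ is good if either $c$ is not periodic, or $c$ has prime period $p\ge2$ and $|Df^{p-1}(f(c))|\min\{|Df^+(c)|,|Df^-(c)|\}>2$ ($Df^\pm(c)$ the one-sided derivatives at $c$). A map $f:I\to I$ is $\epsilon$-expansive if for every interval $L\subset I$ of positive length there is $i\ge1$ with $|f^i(L)|>\epsilon$. A piecewise expanding unimodal map $f_0$ is stably $\epsilon$-expansive if every piecewise expanding unimodal map $f$ sufficiently close to $f_0$ in $|\cdot|_1$ is $\epsilon$-expansive. *)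

(* Defs.v *)
From Stdlib Require Import Reals.
Open Scope R_scope.

Fixpoint iter (n : nat) (f : R -> R) (x : R) : R :=
  match n with
  | O => x
  | S m => f (iter m f x)
  end.

Definition cI (a b : R) : R -> Prop := fun x => a <= x <= b.

Definition I : R -> Prop := cI (-1) 1.

Definition deriv_within (D : R -> Prop) (g : R -> R) (x l : R) : Prop :=
  forall eps, 0 < eps -> exists delta, 0 < delta /\
    forall y, D y -> Rabs (y - x) < delta ->
      Rabs (g y - g x - l * (y - x)) <= eps * Rabs (y - x).

Definition cont_within (D : R -> Prop) (h : R -> R) (x : R) : Prop :=
  forall eps, 0 < eps -> exists delta, 0 < delta /\
    forall y, D y -> Rabs (y - x) < delta -> Rabs (h y - h x) < eps.

Definition C1_on (a b : R) (f Df : R -> R) : Prop :=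
  (forall x, cI a b x -> deriv_within (cI a b) f x (Df x)) /\
  (forall x, cI a b x -> cont_within (cI a b) Df x).

Definition in_B1 (f : R -> R) : Prop :=
  (exists DL DR, C1_on (-1) 0 f DL /\ C1_on 0 1 f DR) /\ f 1 = f (-1).

(* |f - g|_1 < delta, written out with the (unique) piecewise derivatives. *)
Definition B1_close (f g : R -> R) (delta : R) : Prop :=
  exists DLf DRf DLg DRg,
    C1_on (-1) 0 f DLf /\ C1_on 0 1 f DRf /\
    C1_on (-1) 0 g DLg /\ C1_on 0 1 g DRg /\
    (forall x, cI (-1) 0 x ->
       Rabs (f x - g x) < delta /\ Rabs (DLf x - DLg x) < delta) /\
    (forall x, cI 0 1 x ->
       Rabs (f x - g x) < delta /\ Rabs (DRf x - DRg x) < delta).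

(* Piecewise expanding unimodal map (turning point c = 0).
   inf_{[-1,0]} Df > 1  is written  exists lam > 1, Df >= lam on [-1,0];
   sup_{[0,1]} Df < -1  is written  exists lam > 1, Df <= -lam on [0,1]. *)
Definition PEU (f : R -> R) : Prop :=
  in_B1 f /\ f (-1) = -1 /\ f 1 = -1 /\
  (exists DL DR, C1_on (-1) 0 f DL /\ C1_on 0 1 f DR /\
     (exists lam, 1 < lam /\ forall x, cI (-1) 0 x -> lam <= DL x) /\
     (exists lam, 1 < lam /\ forall x, cI 0 1 x -> DR x <= - lam)) /\
  f 0 <= 1.

(* Goodness of a PEU map: c = 0 is not periodic, or it has prime period
   p >= 2 and |Df^{p-1}(f(c))| * min(|Df^+(c)|, |Df^-(c)|) > 2.
   Df^{p-1}(f c) is the derivative (relative to I) of the iterate f^{p-1}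
   at f(c); Df^-(c) = DL 0, Df^+(c) = DR 0. *)
Definition good (f : R -> R) : Prop :=
  (~ exists n : nat, (1 <= n)%nat /\ iter n f 0 = 0) \/
  (exists p : nat, (2 <= p)%nat /\ iter p f 0 = 0 /\
     (forall k : nat, (1 <= k)%nat -> (k < p)%nat -> iter k f 0 <> 0) /\
     exists DL DR l,
       C1_on (-1) 0 f DL /\ C1_on 0 1 f DR /\
       deriv_within I (iter (p - 1) f) (f 0) l /\
       Rabs l * Rmin (Rabs (DR 0)) (Rabs (DL 0)) > 2).

Definition is_interval (L : R -> Prop) : Prop :=
  forall x y z, L x -> L z -> x <= y <= z -> L y.

(* f is eps-expansive: for every interval L in I of positive length there is
   i >= 1 with |f^i(L)| > eps.  f^i(L) is an interval (f^i continuous), whose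
   length is its diameter, so |f^i(L)| > eps iff two points of L have images
   more than eps apart. *)
Definition expansive (eps : R) (f : R -> R) : Prop :=
  forall L : R -> Prop,
    (forall x, L x -> I x) -> is_interval L ->
    (exists x y, L x /\ L y /\ x < y) ->
    exists i : nat, (1 <= i)%nat /\
      exists x y, L x /\ L y /\ Rabs (iter i f x - iter i f y) > eps.

Definition stably_expansive (eps : R) (f0 : R -> R) : Prop :=
  exists delta, 0 < delta /\
    forall g, PEU g -> B1_close g f0 delta -> expansive eps g.

(* Main.v *)
Require Import Defs.
From Stdlib Require Import Reals Lra Lia Classical.
Open Scope R_scope.


Lemma exists_lt_lub (E : R -> Prop) (s d : R) :
  is_lub E s -> 0 < d -> exists w, E w /\ s - d < w.
Proof.
  intros [Hub Hl] Hd.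
  apply NNPP; intro Hn.
  assert (s <= s - d) by (apply Hl; intros w Hw; apply Rnot_lt_le; intro; apply Hn; exists w; auto).
  lra.
Qed.

Lemma mvt_low (a b : R) (g D : R -> R) (m : R) :
  (forall x, cI a b x -> deriv_within (cI a b) g x (D x)) ->
  (forall x, cI a b x -> m <= D x) ->
  forall x y, a <= x -> x <= y -> y <= b -> m * (y - x) <= g y - g x.
Proof.
  intros Hd Hm x y Hax Hxy Hyb.
  apply NNPP; intro Hn; apply Rnot_le_lt in Hn.
  assert (Hxy' : x < y).
  { destruct Hxy as [H|H]; auto. subst. lra. }
  set (e := (m * (y - x) - (g y - g x)) / (y - x) / 2).
  assert (He : 0 < e).
  { unfold e. apply Rmult_lt_0_compat; [|lra]. apply Rdiv_lt_0_compat; lra. }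
  set (phi := fun z => g z - g x - (m - e) * (z - x)).
  assert (Hphiy : phi y < 0).
  { unfold phi. assert (e * (y - x) = (m * (y - x) - (g y - g x)) / 2).
    { unfold e. field. lra. } nra. }
  set (E := fun z => x <= z <= y /\ 0 <= phi z).
  assert (HEb : bound E). { exists y. intros z [Hz _]. lra. }
  assert (HEx : exists z, E z). { exists x. split. lra. unfold phi. lra. }
  destruct (completeness E HEb HEx) as [s Hs].
  assert (Hxs : x <= s). { apply (proj1 Hs). split. lra. unfold phi; lra. }
  assert (Hsy : s <= y). { apply (proj2 Hs). intros z [Hz _]. lra. }
  assert (HIs : cI a b s) by (unfold cI; lra).
  destruct (Hd s HIs e He) as [d [Hd0 Hdd]].
  assert (Hps : 0 <= phi s).
  { destruct (exists_lt_lub E s d Hs Hd0) as [w [[Hw1 Hw2] Hw3]].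
    assert (Hws : w <= s) by (apply (proj1 Hs); split; auto).
    destruct (Req_dec w s) as [Heq|Hne]. { subst; auto. }
    assert (Hw : cI a b w) by (unfold cI; lra).
    assert (H : Rabs (w - s) < d) by (split_Rabs; lra).
    specialize (Hdd w Hw H).
    specialize (Hm s HIs).
    unfold phi in *.
    assert (Hq : g s - g w >= D s * (s - w) - e * (s - w)).
    { split_Rabs; nra. }
    nra. }
  destruct (Rlt_or_le s y) as [Hlt|Hge].
  - set (s' := Rmin y (s + d / 2)).
    assert (Hs'1 : s < s') by (unfold s'; apply Rmin_glb_lt; lra).
    assert (Hs'2 : s' <= y) by (unfold s'; apply Rmin_l).
    assert (Hs'3 : s' <= s + d/2) by (unfold s'; apply Rmin_r).
    assert (Hw : cI a b s') by (unfold cI; lra).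
    assert (Rabs (s' - s) < d) by (rewrite Rabs_right; lra).
    specialize (Hdd s' Hw H).
    rewrite (Rabs_right (s' - s)) in Hdd by lra.
    specialize (Hm s HIs).
    assert (E s').
    { split. lra. unfold phi in *. split_Rabs; nra. }
    assert (s' <= s) by (apply (proj1 Hs); auto). lra.
  - assert (s = y) by lra. subst s. lra.
Qed.

Lemma deriv_opp (D : R -> Prop) g x l :
  deriv_within D g x l -> deriv_within D (fun y => - g y) x (- l).
Proof.
  intros H e He. destruct (H e He) as [d [Hd Hdd]]. exists d; split; auto.
  intros y Hy Hyx. specialize (Hdd y Hy Hyx).
  replace (- g y - - g x - - l * (y - x)) with (- (g y - g x - l * (y - x))) by ring.
  rewrite Rabs_Ropp; auto.
Qed.

Lemma mvt_up (a b : R) (g D : R -> R) (M : R) :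
  (forall x, cI a b x -> deriv_within (cI a b) g x (D x)) ->
  (forall x, cI a b x -> D x <= M) ->
  forall x y, a <= x -> x <= y -> y <= b -> g y - g x <= M * (y - x).
Proof.
  intros Hd HM x y H1 H2 H3.
  assert (H := mvt_low a b (fun z => - g z) (fun z => - D z) (- M)).
  assert (- M * (y - x) <= - g y - - g x).
  { apply H; auto. intros z Hz. apply deriv_opp. auto.
    intros z Hz. specialize (HM z Hz). lra. }
  lra.
Qed.

Lemma deriv_cont (D : R -> Prop) g x l :
  deriv_within D g x l -> cont_within D g x.
Proof.
  intros H e He.
  destruct (H 1 Rlt_0_1) as [d [Hd Hdd]].
  assert (Hl : 0 < Rabs l + 1) by (pose proof (Rabs_pos l); lra).
  exists (Rmin d (e / (Rabs l + 1))). split.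
  { apply Rmin_glb_lt; auto. apply Rdiv_lt_0_compat; lra. }
  intros y Hy Hyx.
  assert (Hy1 : Rabs (y - x) < d) by (pose proof (Rmin_l d (e / (Rabs l + 1))); lra).
  assert (Hy2 : Rabs (y - x) < e / (Rabs l + 1)) by (pose proof (Rmin_r d (e / (Rabs l + 1))); lra).
  specialize (Hdd y Hy Hy1).
  assert (Habs : Rabs (g y - g x) <= (Rabs l + 1) * Rabs (y - x)).
  { assert (Rabs (l * (y - x)) = Rabs l * Rabs (y - x)) by apply Rabs_mult.
    pose proof (Rabs_triang (g y - g x - l * (y - x)) (l * (y - x))).
    replace (g y - g x - l * (y - x) + l * (y - x)) with (g y - g x) in H1 by ring.
    lra. }
  assert ((Rabs l + 1) * Rabs (y - x) < e).
  { apply (Rmult_lt_compat_l (Rabs l + 1)) in Hy2; auto.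
    replace ((Rabs l + 1) * (e / (Rabs l + 1))) with e in Hy2 by (field; lra). auto. }
  lra.
Qed.

Lemma deriv_unique a b g x l1 l2 :
  a < b -> cI a b x -> deriv_within (cI a b) g x l1 -> deriv_within (cI a b) g x l2 -> l1 = l2.
Proof.
  intros Hab Hx H1 H2.
  apply NNPP; intro Hne.
  assert (Hp : 0 < Rabs (l1 - l2)) by (apply Rabs_pos_lt; lra).
  set (e := Rabs (l1 - l2) / 4).
  assert (He : 0 < e) by (unfold e; lra).
  destruct (H1 e He) as [d1 [Hd1 Hdd1]].
  destruct (H2 e He) as [d2 [Hd2 Hdd2]].
  set (d := Rmin d1 d2).
  assert (Hd : 0 < d) by (apply Rmin_glb_lt; auto).
  assert (Hdl : d <= d1) by apply Rmin_l.
  assert (Hdr : d <= d2) by apply Rmin_r.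
  unfold cI in Hx.
  assert (Hy : exists y, cI a b y /\ y <> x /\ Rabs (y - x) < d).
  { destruct (Rlt_or_le x b) as [Hxb|Hxb].
    - exists (Rmin b (x + d/2)).
      assert (Rmin b (x + d/2) <= x + d/2) by apply Rmin_r.
      assert (x < Rmin b (x + d/2)) by (apply Rmin_glb_lt; lra).
      assert (Rmin b (x + d/2) <= b) by apply Rmin_l.
      split. unfold cI; lra. split. lra. rewrite Rabs_right; lra.
    - exists (Rmax a (x - d/2)).
      assert (x - d/2 <= Rmax a (x - d/2)) by apply Rmax_r.
      assert (Rmax a (x - d/2) < x) by (apply Rmax_lub_lt; lra).
      assert (a <= Rmax a (x - d/2)) by apply Rmax_l.
      split. unfold cI; lra. split. lra. rewrite Rabs_left; lra. }
  destruct Hy as [y [Hy [Hyx Hyd]]].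
  specialize (Hdd1 y Hy ltac:(lra)). specialize (Hdd2 y Hy ltac:(lra)).
  assert (Hyp : 0 < Rabs (y - x)) by (apply Rabs_pos_lt; lra).
  pose proof (Rabs_triang (g y - g x - l2 * (y - x)) (- (g y - g x - l1 * (y - x)))).
  rewrite Rabs_Ropp in H.
  replace (g y - g x - l2 * (y - x) + - (g y - g x - l1 * (y - x))) with ((l1 - l2) * (y - x)) in H by ring.
  rewrite Rabs_mult in H.
  unfold e in *. nra.
Qed.

Lemma my_ivt a b F :
  a <= b -> (forall x, cI a b x -> cont_within (cI a b) F x) ->
  F a <= 0 -> 0 <= F b -> exists z, cI a b z /\ F z = 0.
Proof.
  intros Hab Hc Ha Hb.
  set (E := fun x => a <= x <= b /\ F x <= 0).
  assert (HEb : bound E). { exists b. intros z [Hz _]. lra. }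
  assert (HEx : exists z, E z). { exists a. split; auto. lra. }
  destruct (completeness E HEb HEx) as [s Hs].
  assert (Has : a <= s). { apply (proj1 Hs). split; auto. lra. }
  assert (Hsb : s <= b). { apply (proj2 Hs). intros z [Hz _]. lra. }
  assert (HIs : cI a b s) by (unfold cI; lra).
  exists s. split; auto.
  destruct (Rtotal_order (F s) 0) as [Hlt|[Heq|Hgt]]; auto; exfalso.
  - destruct (Hc s HIs (- F s) ltac:(lra)) as [d [Hd Hdd]].
    assert (Hsb' : s < b). { destruct Hsb as [H|H]; auto. subst. lra. }
    set (s' := Rmin b (s + d/2)).
    assert (s < s') by (apply Rmin_glb_lt; lra).
    assert (s' <= b) by apply Rmin_l.
    assert (s' <= s + d/2) by apply Rmin_r.
    assert (HH : cI a b s') by (unfold cI; lra).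
    specialize (Hdd s' HH ltac:(rewrite Rabs_right; lra)).
    assert (E s') by (split; [lra| split_Rabs; lra]).
    assert (s' <= s) by (apply (proj1 Hs); auto). lra.
  - destruct (Hc s HIs (F s) ltac:(lra)) as [d [Hd Hdd]].
    destruct (exists_lt_lub E s d Hs Hd) as [w [[Hw1 Hw2] Hw3]].
    assert (w <= s) by (apply (proj1 Hs); split; auto).
    assert (HH : cI a b w) by (unfold cI; lra).
    specialize (Hdd w HH ltac:(split_Rabs; lra)).
    split_Rabs; lra.
Qed.

Lemma pow_big lam d M : 1 < lam -> 0 < d -> exists n : nat, M < lam ^ n * d.
Proof.
  intros Hl Hd.
  destruct (Pow_x_infinity lam ltac:(rewrite Rabs_right; lra) (M / d + 1)) as [N HN].
  exists N. specialize (HN N (le_n N)).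
  rewrite Rabs_right in HN by (apply Rle_ge, pow_le; lra).
  assert (M / d * d = M) by (field; lra).
  nra.
Qed.


Definition samehalf a b := (a <= 0 /\ b <= 0) \/ (0 <= a /\ 0 <= b).

Lemma iter_I (g : R -> R) : (forall x, I x -> I (g x)) -> forall n x, I x -> I (iter n g x).
Proof. intros H n; induction n; simpl; auto. Qed.

Section Core.
Variables (g : R -> R) (lam eps kap : R) (P : nat).
Hypothesis HI : forall x, I x -> I (g x).
Hypothesis HIVT : forall a b z, I a -> I b -> samehalf a b -> a <= b ->
  (g a <= z <= g b \/ g b <= z <= g a) -> exists x, a <= x <= b /\ g x = z.
Hypothesis HE : forall a b, I a -> I b -> samehalf a b -> lam * Rabs (a - b) <= Rabs (g a - g b).
Hypothesis Hlam : 1 < lam.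
Hypothesis Heps : 0 < eps.
Hypothesis Hkap : 1 < kap.
Hypothesis HA : forall j, (1 <= j)%nat -> (j < P)%nat -> iter j g 0 = 0 \/ eps < Rabs (iter j g 0).
Hypothesis HB : forall h e, 0 < h -> h <= eps -> (e = h \/ e = -h) -> I e ->
  (forall j, (j < P)%nat -> samehalf (iter j g 0) (iter j g e)) ->
  2 * kap * h <= Rabs (iter P g 0 - iter P g e).

Variable L : R -> Prop.
Hypothesis HL : forall x, L x -> I x.
Hypothesis Hint : is_interval L.
Hypothesis Hc : forall i, (1 <= i)%nat -> forall x y, L x -> L y -> Rabs (iter i g x - iter i g y) <= eps.

Definition Img i u v := forall z, u <= z <= v -> exists x, L x /\ iter i g x = z.
Definition Seg i p q := Img i (Rmin p q) (Rmax p q).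

Lemma Seg_pt i p q : Seg i p q -> (exists x, L x /\ iter i g x = p) /\ (exists x, L x /\ iter i g x = q).
Proof.
  intros H; split; apply H; unfold Rmin, Rmax; destruct Rle_dec; lra.
Qed.

Lemma Seg_I i p q : Seg i p q -> I p /\ I q.
Proof.
  intros H. destruct (Seg_pt i p q H) as [[x [Hx1 Hx2]] [y [Hy1 Hy2]]].
  subst. split; apply iter_I; auto.
Qed.

Lemma Seg_len i p q : (1 <= i)%nat -> Seg i p q -> Rabs (p - q) <= eps.
Proof.
  intros Hi H. destruct (Seg_pt i p q H) as [[x [Hx1 Hx2]] [y [Hy1 Hy2]]].
  subst. apply Hc; auto.
Qed.

Lemma Seg_push i p q : Seg i p q -> samehalf p q -> Seg (S i) (g p) (g q).
Proof.
  intros H Hs z Hz.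
  destruct (Seg_I i p q H) as [Ip Iq].
  assert (Hx : exists x, Rmin p q <= x <= Rmax p q /\ g x = z).
  { unfold Rmin, Rmax in *. destruct (Rle_dec p q).
    - apply HIVT; auto. destruct (Rle_dec (g p) (g q)); lra.
    - apply HIVT; auto. unfold samehalf in *; lra. lra.
      destruct (Rle_dec (g p) (g q)); lra. }
  destruct Hx as [x [Hx1 Hx2]].
  destruct (H x Hx1) as [y [Hy1 Hy2]].
  exists y. split; auto. simpl. rewrite Hy2. auto.
Qed.

Lemma Seg_sub i p q r : Seg i p q -> Rmin p q <= r <= Rmax p q -> Seg i p r.
Proof.
  intros H Hr z Hz. apply H. unfold Rmin, Rmax in *.
  repeat destruct Rle_dec; lra.
Qed.

Lemma Seg_sym i p q : Seg i p q -> Seg i q p.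
Proof. unfold Seg. rewrite Rmin_comm, Rmax_comm. auto. Qed.

Definition strad p q := (p < 0 < q) \/ (q < 0 < p).

Lemma nstrad p q : ~ strad p q -> samehalf p q.
Proof.
  unfold strad, samehalf. intros H.
  destruct (Rtotal_order p 0) as [a|[a|a]]; destruct (Rtotal_order q 0) as [b|[b|b]];
    try (left; lra); try (right; lra); exfalso; apply H; lra.
Qed.

Lemma ms_aux n : forall i p q, (1 <= i)%nat -> Seg i p q ->
  (exists i' p' q', (1 <= i')%nat /\ Seg i' p' q' /\ strad p' q' /\ Rabs (p - q) <= Rabs (p' - q'))
  \/ (exists p' q', Seg (i + n) p' q' /\ lam ^ n * Rabs (p - q) <= Rabs (p' - q')).
Proof.
  induction n; intros i p q Hi H.
  - right. exists p, q. rewrite Nat.add_0_r. simpl. split; auto. lra.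
  - destruct (classic (strad p q)) as [Hs|Hs].
    + left. exists i, p, q. repeat split; auto. lra.
    + apply nstrad in Hs.
      destruct (Seg_I i p q H) as [Ip Iq].
      assert (He := HE p q Ip Iq Hs).
      destruct (IHn (S i) (g p) (g q) ltac:(lia) (Seg_push i p q H Hs)) as
        [[i' [p' [q' [H1 [H2 [H3 H4]]]]]] | [p' [q' [H1 H2]]]].
      * left. exists i', p', q'. repeat split; auto.
        pose proof (Rabs_pos (p - q)). nra.
      * right. exists p', q'. rewrite Nat.add_succ_r. split; auto.
        simpl. pose proof (Rabs_pos (p - q)).
        assert (0 <= lam ^ n) by (apply pow_le; lra). nra.
Qed.

Lemma must_straddle i p q : (1 <= i)%nat -> Seg i p q -> p <> q ->
  exists i' p' q', (1 <= i')%nat /\ Seg i' p' q' /\ strad p' q' /\ Rabs (p - q) <= Rabs (p' - q').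
Proof.
  intros Hi H Hne.
  assert (Hpos : 0 < Rabs (p - q)) by (apply Rabs_pos_lt; lra).
  destruct (pow_big lam (Rabs (p - q)) eps Hlam Hpos) as [n Hn].
  destruct (ms_aux n i p q Hi H) as [Hl | [p' [q' [H1 H2]]]]; auto.
  exfalso. pose proof (Seg_len (i + n) p' q' ltac:(lia) H1). lra.
Qed.

Lemma strad_half i p q : Seg i p q -> strad p q ->
  exists e, Seg i 0 e /\ e <> 0 /\ Rabs (p - q) / 2 <= Rabs e.
Proof.
  intros H Hs.
  destruct (Rle_dec (Rabs p) (Rabs q)).
  - exists q. split. apply Seg_sym. apply (Seg_sub i q p 0). apply Seg_sym; auto.
    unfold strad, Rmin, Rmax in *. destruct Rle_dec; lra.
    unfold strad in Hs. split. lra. split_Rabs; lra.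
  - exists p. split. apply Seg_sym. apply (Seg_sub i p q 0); auto.
    unfold strad, Rmin, Rmax in *. destruct Rle_dec; lra.
    unfold strad in Hs. split. lra. split_Rabs; lra.
Qed.

Lemma cycle i e : (1 <= i)%nat -> Seg i 0 e -> e <> 0 ->
  exists i' e', (1 <= i')%nat /\ Seg i' 0 e' /\ e' <> 0 /\ kap * Rabs e <= Rabs e'.
Proof.
  intros Hi H Hne.
  set (h := Rabs e).
  assert (Hh : 0 < h) by (apply Rabs_pos_lt; auto).
  assert (Hhe : h <= eps).
  { pose proof (Seg_len i 0 e Hi H). unfold h. rewrite Rabs_minus_sym, Rminus_0_r in H0. auto. }
  assert (He : e = h \/ e = - h) by (unfold h; split_Rabs; lra).
  assert (Ie : I e) by (apply (Seg_I i 0 e H)).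
  assert (Hind : forall j, (j <= P)%nat -> Seg (i + j) (iter j g 0) (iter j g e) /\
             forall j', (j' < j)%nat -> samehalf (iter j' g 0) (iter j' g e)).
  { induction j; intros Hj.
    - rewrite Nat.add_0_r. simpl. split; auto. intros; lia.
    - destruct (IHj ltac:(lia)) as [H1 H2].
      assert (Hs : samehalf (iter j g 0) (iter j g e)).
      { destruct j.
        - simpl. unfold samehalf. destruct (Rle_dec e 0); lra.
        - destruct (HA (S j) ltac:(lia) ltac:(lia)) as [H3|H3].
          + rewrite H3. unfold samehalf. destruct (Rle_dec (iter (S j) g e) 0); lra.
          + pose proof (Seg_len (i + S j) _ _ ltac:(lia) H1).
            unfold samehalf. split_Rabs; lra. }
      split.
      + rewrite Nat.add_succ_r. apply (Seg_push _ _ _ H1 Hs).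
      + intros j' Hj'. destruct (Nat.eq_dec j' j). subst; auto. apply H2; lia. }
  destruct (Hind P (le_n P)) as [H1 H2].
  pose proof (HB h e Hh Hhe He Ie H2) as H3.
  assert (Hne' : iter P g 0 <> iter P g e).
  { intro Heq. rewrite Heq, Rminus_diag, Rabs_R0 in H3. nra. }
  destruct (must_straddle (i + P) _ _ ltac:(lia) H1 Hne') as [i' [p' [q' [G1 [G2 [G3 G4]]]]]].
  destruct (strad_half _ _ _ G2 G3) as [e' [E1 [E2 E3]]].
  exists i', e'. repeat split; auto. fold h. nra.
Qed.

Lemma core_false x0 y0 : L x0 -> L y0 -> x0 < y0 -> False.
Proof.
  intros Hx Hy Hxy.
  assert (S0 : Seg 0 x0 y0).
  { intros z Hz. exists z. split; auto.
    unfold Rmin, Rmax in Hz. destruct Rle_dec; try lra.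
    apply (Hint x0 z y0); auto. }
  assert (Hstart : exists p q, Seg 1 p q /\ p <> q).
  { destruct (classic (strad x0 y0)) as [Hs|Hs].
    - assert (S1 : Seg 0 0 y0).
      { apply Seg_sym. apply (Seg_sub 0 y0 x0 0). apply Seg_sym; auto.
        unfold strad, Rmin, Rmax in *. destruct Rle_dec; lra. }
      assert (Hsh : samehalf 0 y0) by (unfold strad, samehalf in *; lra).
      destruct (Seg_I _ _ _ S1) as [I0 Iy].
      pose proof (HE _ _ I0 Iy Hsh).
      exists (g 0), (g y0). split. apply Seg_push; auto.
      intro Heq. rewrite Heq, Rminus_diag, Rabs_R0 in H.
      unfold strad in Hs. rewrite Rabs_left in H by lra. nra.
    - apply nstrad in Hs.
      destruct (Seg_I _ _ _ S0) as [I0 Iy].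
      pose proof (HE _ _ I0 Iy Hs).
      exists (g x0), (g y0). split. apply Seg_push; auto.
      intro Heq. rewrite Heq, Rminus_diag, Rabs_R0 in H.
      rewrite Rabs_left in H by lra. nra. }
  destruct Hstart as [p [q [Hpq Hne]]].
  destruct (must_straddle 1 p q (le_n 1) Hpq Hne) as [i' [p' [q' [G1 [G2 [G3 G4]]]]]].
  destruct (strad_half _ _ _ G2 G3) as [e [E1 [E2 E3]]].
  assert (Hep : 0 < Rabs e) by (apply Rabs_pos_lt; auto).
  assert (Hit : forall n, exists i e', (1 <= i)%nat /\ Seg i 0 e' /\ e' <> 0 /\ kap ^ n * Rabs e <= Rabs e').
  { induction n.
    - exists i', e. repeat split; auto. simpl. lra.
    - destruct IHn as [i [e' [H1 [H2 [H3 H4]]]]].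
      destruct (cycle i e' H1 H2 H3) as [i2 [e2 [K1 [K2 [K3 K4]]]]].
      exists i2, e2. repeat split; auto. simpl. nra. }
  destruct (pow_big kap (Rabs e) eps Hkap Hep) as [n Hn].
  destruct (Hit n) as [i [e' [H1 [H2 [H3 H4]]]]].
  pose proof (Seg_len i 0 e' H1 H2). rewrite Rabs_minus_sym, Rminus_0_r in H. lra.
Qed.

End Core.


Lemma core_expansive g lam eps kap P :
  (forall x, I x -> I (g x)) ->
  (forall a b z, I a -> I b -> samehalf a b -> a <= b ->
     (g a <= z <= g b \/ g b <= z <= g a) -> exists x, a <= x <= b /\ g x = z) ->
  (forall a b, I a -> I b -> samehalf a b -> lam * Rabs (a - b) <= Rabs (g a - g b)) ->
  1 < lam -> 0 < eps -> 1 < kap ->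
  (forall j, (1 <= j)%nat -> (j < P)%nat -> iter j g 0 = 0 \/ eps < Rabs (iter j g 0)) ->
  (forall h e, 0 < h -> h <= eps -> (e = h \/ e = -h) -> I e ->
    (forall j, (j < P)%nat -> samehalf (iter j g 0) (iter j g e)) ->
    2 * kap * h <= Rabs (iter P g 0 - iter P g e)) ->
  expansive eps g.
Proof.
  intros HI HIVT HE Hlam Heps Hkap HA HB L HL Hint [x [y [Hx [Hy Hxy]]]].
  apply NNPP; intro Hn. 
  apply (core_false g lam eps kap P HI HIVT HE Hlam Hkap HA HB L HL Hint) with x y; auto.
  intros i Hi a b Ha Hb. apply Rnot_lt_le; intro Hlt. apply Hn.
  exists i. split; auto. exists a, b. repeat split; auto.
Qed.

Lemma deriv_restr a b a' b' g x l :
  a <= a' -> b' <= b -> deriv_within (cI a b) g x l -> deriv_within (cI a' b') g x l.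
Proof.
  intros H1 H2 H e He. destruct (H e He) as [d [Hd Hdd]]. exists d. split; auto.
  intros y Hy. apply Hdd. unfold cI in *; lra.
Qed.

Lemma mvt_two c d G DG a b A e :
  (forall x, cI c d x -> deriv_within (cI c d) G x (DG x)) ->
  c <= a -> a <= b -> b <= d ->
  (forall x, a <= x <= b -> A - e <= DG x <= A + e) ->
  (A - e) * (b - a) <= G b - G a <= (A + e) * (b - a).
Proof.
  intros Hd H1 H2 H3 Hb.
  assert (Hd' : forall x, cI a b x -> deriv_within (cI a b) G x (DG x)).
  { intros x Hx. apply (deriv_restr c d); try lra. apply Hd. unfold cI in *; lra. }
  split.
  - apply (mvt_low a b G DG); try lra; auto. intros x Hx; apply Hb; auto.
  - apply (mvt_up a b G DG); try lra; auto. intros x Hx; apply Hb; auto.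
Qed.

Definition Expd (g : R -> R) (lm : R) := exists DL DR, C1_on (-1) 0 g DL /\ C1_on 0 1 g DR /\
  (forall x, cI (-1) 0 x -> lm <= DL x) /\ (forall x, cI 0 1 x -> DR x <= - lm).

Lemma expd_HE g lm : Expd g lm -> 0 <= lm ->
  forall a b, I a -> I b -> samehalf a b -> lm * Rabs (a - b) <= Rabs (g a - g b).
Proof.
  intros [DL [DR [[HL1 _] [[HR1 _] [HL HR]]]]] Hlm a b Ia Ib Hs.
  unfold I, cI in *.
  destruct Hs as [Hs|Hs].
  - destruct (Rle_dec a b).
    + pose proof (mvt_low (-1) 0 g DL lm HL1 HL a b ltac:(lra) ltac:(lra) ltac:(lra)).
      split_Rabs; nra.
    + pose proof (mvt_low (-1) 0 g DL lm HL1 HL b a ltac:(lra) ltac:(lra) ltac:(lra)).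
      split_Rabs; nra.
  - destruct (Rle_dec a b).
    + pose proof (mvt_up 0 1 g DR (-lm) HR1 HR a b ltac:(lra) ltac:(lra) ltac:(lra)).
      split_Rabs; nra.
    + pose proof (mvt_up 0 1 g DR (-lm) HR1 HR b a ltac:(lra) ltac:(lra) ltac:(lra)).
      split_Rabs; nra.
Qed.

Lemma expd_I g lm : Expd g lm -> 0 <= lm -> g (-1) = -1 -> g 1 = -1 -> g 0 <= 1 ->
  forall x, I x -> I (g x).
Proof.
  intros [DL [DR [[HL1 _] [[HR1 _] [HL HR]]]]] Hlm H1 H2 H3 x Ix.
  unfold I, cI in *.
  destruct (Rle_dec x 0).
  - pose proof (mvt_low (-1) 0 g DL lm HL1 HL (-1) x ltac:(lra) ltac:(lra) ltac:(lra)).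
    pose proof (mvt_low (-1) 0 g DL lm HL1 HL x 0 ltac:(lra) ltac:(lra) ltac:(lra)).
    nra.
  - pose proof (mvt_up 0 1 g DR (-lm) HR1 HR 0 x ltac:(lra) ltac:(lra) ltac:(lra)).
    pose proof (mvt_up 0 1 g DR (-lm) HR1 HR x 1 ltac:(lra) ltac:(lra) ltac:(lra)).
    nra.
Qed.

Lemma cont_shift (D : R -> Prop) G x z :
  cont_within D G x -> cont_within D (fun y => G y - z) x /\ cont_within D (fun y => z - G y) x.
Proof.
  intros H. split; intros e He; destruct (H e He) as [d [Hd Hdd]]; exists d; split; auto;
  intros y Hy Hyx; specialize (Hdd y Hy Hyx); split_Rabs; lra.
Qed.

Lemma ivt_deriv a b G DG c d z :
  (forall x, cI a b x -> deriv_within (cI a b) G x (DG x)) ->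
  a <= c -> c <= d -> d <= b ->
  (G c <= z <= G d \/ G d <= z <= G c) -> exists x, c <= x <= d /\ G x = z.
Proof.
  intros Hd H1 H2 H3 Hz.
  assert (Hc : forall x, cI c d x -> cont_within (cI c d) G x).
  { intros x Hx. apply (deriv_cont _ _ _ (DG x)). apply (deriv_restr a b); try lra.
    apply Hd. unfold cI in *; lra. }
  destruct Hz as [Hz|Hz].
  - destruct (my_ivt c d (fun y => G y - z) H2) as [x [Hx1 Hx2]]; try lra.
    intros x Hx. apply (cont_shift _ G x z (Hc x Hx)).
    exists x. split. exact Hx1. lra.
  - destruct (my_ivt c d (fun y => z - G y) H2) as [x [Hx1 Hx2]]; try lra.
    intros x Hx. apply (cont_shift _ G x z (Hc x Hx)).
    exists x. split. exact Hx1. lra.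
Qed.

Lemma expd_IVT g lm : Expd g lm ->
  forall a b z, I a -> I b -> samehalf a b -> a <= b ->
     (g a <= z <= g b \/ g b <= z <= g a) -> exists x, a <= x <= b /\ g x = z.
Proof.
  intros [DL [DR [[HL1 _] [[HR1 _] [HL HR]]]]] a b z Ia Ib Hs Hab Hz.
  unfold I, cI in *. destruct Hs as [Hs|Hs].
  - apply (ivt_deriv (-1) 0 g DL); auto; lra.
  - apply (ivt_deriv 0 1 g DR); auto; lra.
Qed.

Lemma HB_lam g lam eps kap P :
  (forall x, I x -> I (g x)) ->
  (forall a b, I a -> I b -> samehalf a b -> lam * Rabs (a - b) <= Rabs (g a - g b)) ->
  1 <= lam -> 2 * kap <= lam ^ P ->
  forall h e, 0 < h -> h <= eps -> (e = h \/ e = -h) -> I e ->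
    (forall j, (j < P)%nat -> samehalf (iter j g 0) (iter j g e)) ->
    2 * kap * h <= Rabs (iter P g 0 - iter P g e).
Proof.
  intros HI HE Hlam HP h e Hh Hhe He Ie Hs.
  assert (I0 : I 0) by (unfold I, cI; lra).
  assert (forall j, (j <= P)%nat -> lam ^ j * h <= Rabs (iter j g 0 - iter j g e)).
  { induction j; intros Hj.
    - simpl. destruct He; subst; split_Rabs; lra.
    - specialize (IHj ltac:(lia)). simpl.
      pose proof (HE (iter j g 0) (iter j g e) (iter_I g HI j 0 I0) (iter_I g HI j e Ie) (Hs j ltac:(lia))).
      assert (0 <= lam ^ j * h) by (apply Rmult_le_pos; [apply pow_le|]; lra).
      nra. }
  specialize (H P (le_n P)). nra.
Qed.

Lemma finite_eps (u : nat -> R) (P : nat) :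
  exists eps, 0 < eps /\ forall j, (j < P)%nat -> u j = 0 \/ eps < Rabs (u j).
Proof.
  induction P.
  - exists 1. split. lra. intros; lia.
  - destruct IHP as [eps [He H]].
    destruct (Req_dec (u P) 0) as [H0|H0].
    + exists eps. split; auto. intros j Hj. destruct (Nat.eq_dec j P). subst; auto. apply H; lia.
    + assert (0 < Rabs (u P)) by (apply Rabs_pos_lt; auto).
      exists (Rmin eps (Rabs (u P) / 2)). split. apply Rmin_glb_lt; lra.
      intros j Hj. destruct (Nat.eq_dec j P).
      * subst. right. pose proof (Rmin_r eps (Rabs (u P) / 2)). lra.
      * destruct (H j ltac:(lia)) as [K|K]; auto. right. pose proof (Rmin_l eps (Rabs (u P) / 2)). lra.
Qed.

Lemma PEU_expd f : PEU f -> exists lm, 1 < lm /\ Expd f lm.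
Proof.
  intros [_ [_ [_ [[DL [DR [H1 [H2 [[l1 [Hl1 HL]] [l2 [Hl2 HR]]]]]]] _]]]].
  exists (Rmin l1 l2). split. apply Rmin_glb_lt; auto.
  exists DL, DR. repeat split; try apply H1; try apply H2.
  - intros x Hx. pose proof (Rmin_l l1 l2). specialize (HL x Hx). lra.
  - intros x Hx. pose proof (Rmin_r l1 l2). specialize (HR x Hx). lra.
Qed.

Lemma PEU_I f : PEU f -> forall x, I x -> I (f x).
Proof.
  intros Hf. destruct (PEU_expd f Hf) as [lm [Hlm He]].
  destruct Hf as [_ [H1 [H2 [_ H3]]]].
  apply (expd_I f lm); auto; lra.
Qed.

Theorem part1 f : PEU f -> exists eps, 0 < eps /\ expansive eps f.
Proof.
  intros Hf. destruct (PEU_expd f Hf) as [lm [Hlm He]].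
  destruct (pow_big lm 1 4 Hlm Rlt_0_1) as [P HP].
  destruct (finite_eps (fun j => iter j f 0) P) as [eps [Heps HA]].
  exists eps. split; auto.
  apply (core_expansive f lm eps 2 P).
  - apply PEU_I; auto.
  - apply (expd_IVT f lm He).
  - apply (expd_HE f lm He). lra.
  - auto.
  - auto.
  - lra.
  - intros j _ Hj. apply HA; auto.
  - apply (HB_lam f lm eps 2 P). apply PEU_I; auto. apply (expd_HE f lm He). lra. lra. lra.
Qed.


Lemma C1_unique a b G D1 D2 : C1_on a b G D1 -> C1_on a b G D2 -> a < b ->
  forall x, cI a b x -> D1 x = D2 x.
Proof.
  intros [H1 _] [H2 _] Hab x Hx. apply (deriv_unique a b G x); auto.
Qed.

Lemma cont_glue G x :
  (x <= 0 -> cont_within (cI (-1) 0) G x) -> (0 <= x -> cont_within (cI 0 1) G x) ->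
  I x -> cont_within I G x.
Proof.
  intros H1 H2 Hx e He. unfold I, cI in *.
  destruct (Rtotal_order x 0) as [Hlt|[Heq|Hgt]].
  - destruct (H1 ltac:(lra) e He) as [d [Hd Hdd]].
    exists (Rmin d (-x)). split. apply Rmin_glb_lt; lra.
    intros y Hy Hyx. pose proof (Rmin_l d (-x)). pose proof (Rmin_r d (-x)).
    apply Hdd. split_Rabs; lra. lra.
  - subst. destruct (H1 ltac:(lra) e He) as [d1 [Hd1 Hdd1]].
    destruct (H2 ltac:(lra) e He) as [d2 [Hd2 Hdd2]].
    exists (Rmin d1 d2). split. apply Rmin_glb_lt; lra.
    intros y Hy Hyx. pose proof (Rmin_l d1 d2). pose proof (Rmin_r d1 d2).
    destruct (Rle_dec y 0).
    + apply Hdd1. lra. lra.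
    + apply Hdd2. lra. lra.
  - destruct (H2 ltac:(lra) e He) as [d [Hd Hdd]].
    exists (Rmin d x). split. apply Rmin_glb_lt; lra.
    intros y Hy Hyx. pose proof (Rmin_l d x). pose proof (Rmin_r d x).
    apply Hdd. split_Rabs; lra. lra.
Qed.

Lemma abs_bound A e d X : 0 <= d -> 0 <= e -> (A - e) * d <= X <= (A + e) * d ->
  (Rabs A - e) * d <= Rabs X <= (Rabs A + e) * d.
Proof. intros. split_Rabs; nra. Qed.

Lemma iter_succ_r (g : R -> R) n x : iter (S n) g x = iter n g (g x).
Proof. induction n; simpl; auto. simpl in IHn. rewrite IHn. auto. Qed.

Section Stable.
Variables (f DL DR : R -> R) (lm : R).
Hypothesis Hf : PEU f.
Hypothesis HDL : C1_on (-1) 0 f DL.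
Hypothesis HDR : C1_on 0 1 f DR.
Hypothesis HL : forall x, cI (-1) 0 x -> lm <= DL x.
Hypothesis HR : forall x, cI 0 1 x -> DR x <= - lm.
Hypothesis Hlm : 1 < lm.

Definition near g d := PEU g /\ exists DLg DRg, C1_on (-1) 0 g DLg /\ C1_on 0 1 g DRg /\
  (forall x, I x -> Rabs (g x - f x) < d) /\
  (forall x, cI (-1) 0 x -> Rabs (DLg x - DL x) < d) /\
  (forall x, cI 0 1 x -> Rabs (DRg x - DR x) < d).

Lemma near_mono g d d' : near g d -> d <= d' -> near g d'.
Proof.
  intros [H0 [a [b [H1 [H2 [H3 [H4 H5]]]]]]] Hd. split; auto. exists a, b.
  refine (conj H1 (conj H2 (conj _ (conj _ _)))); intros x Hx;
    [specialize (H3 x Hx)|specialize (H4 x Hx)|specialize (H5 x Hx)]; lra.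
Qed.

Lemma near_self d : 0 < d -> near f d.
Proof.
  intros Hd. split; auto. exists DL, DR.
  refine (conj HDL (conj HDR (conj _ (conj _ _)))); intros; rewrite Rminus_diag, Rabs_R0; auto.
Qed.

Lemma B1_near g d : PEU g -> B1_close g f d -> near g d.
Proof.
  intros Hg [a1 [a2 [b1 [b2 [A1 [A2 [B1 [B2 [C3 C4]]]]]]]]].
  split; auto. exists a1, a2. refine (conj A1 (conj A2 (conj _ (conj _ _)))).
  - intros x Hx. unfold I, cI in Hx. destruct (Rle_dec x 0).
    + apply (C3 x). unfold cI; lra.
    + apply (C4 x). unfold cI; lra.
  - intros x Hx. rewrite <- (C1_unique (-1) 0 f b1 DL B1 HDL ltac:(lra) x Hx). apply (C3 x Hx).
  - intros x Hx. rewrite <- (C1_unique 0 1 f b2 DR B2 HDR ltac:(lra) x Hx). apply (C4 x Hx).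
Qed.

Lemma cont_f x : I x -> cont_within I f x.
Proof.
  intros Hx. apply cont_glue; auto; intros H.
  - apply (deriv_cont _ _ _ (DL x)). apply HDL. unfold I, cI in *; lra.
  - apply (deriv_cont _ _ _ (DR x)). apply HDR. unfold I, cI in *; lra.
Qed.

Lemma orbit_cont k x0 : I x0 -> forall e, 0 < e -> exists r, 0 < r /\ exists d, 0 < d /\
  forall g u, near g d -> I u -> Rabs (u - x0) < r -> Rabs (iter k g u - iter k f x0) < e.
Proof.
  intros Hx0. induction k; intros e He.
  - exists e. split; auto. exists 1. split. lra. intros. simpl. auto.
  - assert (Iy : I (iter k f x0)) by (apply iter_I; auto; apply PEU_I; auto).
    destruct (cont_f _ Iy (e/2) ltac:(lra)) as [eta [Heta Hc]].
    destruct (IHk eta Heta) as [r [Hr [d1 [Hd1 H1]]]].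
    exists r. split; auto. exists (Rmin d1 (e/2)). split. apply Rmin_glb_lt; lra.
    intros g u Hg Iu Hu. simpl.
    assert (Hg1 : near g d1) by (apply (near_mono g _ d1 Hg); apply Rmin_l).
    assert (Hg2 : near g (e/2)) by (apply (near_mono g _ (e/2) Hg); apply Rmin_r).
    specialize (H1 g u Hg1 Iu Hu).
    assert (Iz : I (iter k g u)) by (apply iter_I; auto; apply PEU_I; apply Hg).
    specialize (Hc _ Iz H1).
    destruct Hg2 as [_ [_ [_ [_ [_ [H3 _]]]]]]. specialize (H3 _ Iz).
    split_Rabs; lra.
Qed.

Lemma orbit_unif P eta : 0 < eta -> exists d, 0 < d /\
  forall g, near g d -> forall j, (j < P)%nat -> Rabs (iter j g 0 - iter j f 0) < eta.
Proof.
  intros Heta. assert (I0 : I 0) by (unfold I, cI; lra).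
  induction P.
  - exists 1. split. lra. intros; lia.
  - destruct IHP as [d1 [Hd1 H1]].
    destruct (orbit_cont P 0 I0 eta Heta) as [r [Hr [d2 [Hd2 H2]]]].
    exists (Rmin d1 d2). split. apply Rmin_glb_lt; lra.
    intros g Hg j Hj.
    destruct (Nat.eq_dec j P).
    + subst. apply H2; auto. apply (near_mono g _ _ Hg); apply Rmin_r.
      rewrite Rminus_diag, Rabs_R0; auto.
    + apply H1; [|lia]. apply (near_mono g _ _ Hg); apply Rmin_l.
Qed.

Definition Df x := if Rle_dec x 0 then DL x else DR x.

Lemma Df_ge q : I q -> lm <= Rabs (Df q).
Proof.
  intros Hq. unfold Df, I, cI in *. destruct Rle_dec.
  - specialize (HL q ltac:(unfold cI; lra)). rewrite Rabs_right; lra.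
  - specialize (HR q ltac:(unfold cI; lra)). rewrite Rabs_left; lra.
Qed.

Lemma step_ord q : I q -> q <> 0 -> forall e, 0 < e -> exists r, 0 < r /\ exists d, 0 < d /\
  forall g a b, near g d -> I a -> I b -> a <= b -> Rabs (a - q) < r -> Rabs (b - q) < r ->
  (Rabs (Df q) - e) * (b - a) <= Rabs (g b - g a) <= (Rabs (Df q) + e) * (b - a).
Proof.
  intros Iq Hq e He. unfold I, cI in Iq.
  destruct (Rtotal_order q 0) as [Hlt|[Heq|Hgt]]; [|contradiction|].
  - destruct (proj2 HDL q ltac:(unfold cI; lra) (e/2) ltac:(lra)) as [r [Hr Hc]].
    exists (Rmin r (-q)). split. apply Rmin_glb_lt; lra.
    exists (e/2). split. lra.
    intros g a b [_ [DLg [DRg [G1 [_ [_ [G2 _]]]]]]] Ia Ib Hab Ha Hb.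
    pose proof (Rmin_l r (-q)). pose proof (Rmin_r r (-q)).
    unfold I, cI in Ia, Ib.
    assert (Hdq : Df q = DL q) by (unfold Df; destruct Rle_dec; lra).
    rewrite Hdq.
    apply abs_bound. lra. lra.
    apply (mvt_two (-1) 0 g DLg); try apply G1; try (split_Rabs; lra).
    intros x Hx. assert (cI (-1) 0 x) by (unfold cI; split_Rabs; lra).
    specialize (G2 x H1). assert (Rabs (x - q) < r) by (split_Rabs; lra).
    specialize (Hc x H1 H2). split_Rabs; lra.
  - destruct (proj2 HDR q ltac:(unfold cI; lra) (e/2) ltac:(lra)) as [r [Hr Hc]].
    exists (Rmin r q). split. apply Rmin_glb_lt; lra.
    exists (e/2). split. lra.
    intros g a b [_ [DLg [DRg [_ [G1 [_ [_ G2]]]]]]] Ia Ib Hab Ha Hb.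
    pose proof (Rmin_l r q). pose proof (Rmin_r r q).
    unfold I, cI in Ia, Ib.
    assert (Hdq : Df q = DR q) by (unfold Df; destruct Rle_dec; lra).
    rewrite Hdq.
    apply abs_bound. lra. lra.
    apply (mvt_two 0 1 g DRg); try apply G1; try (split_Rabs; lra).
    intros x Hx. assert (cI 0 1 x) by (unfold cI; split_Rabs; lra).
    specialize (G2 x H1). assert (Rabs (x - q) < r) by (split_Rabs; lra).
    specialize (Hc x H1 H2). split_Rabs; lra.
Qed.

Lemma step_bound q : I q -> q <> 0 -> forall e, 0 < e -> exists r, 0 < r /\ exists d, 0 < d /\
  forall g u v, near g d -> I u -> I v -> Rabs (u - q) < r -> Rabs (v - q) < r ->
  (Rabs (Df q) - e) * Rabs (u - v) <= Rabs (g u - g v) <= (Rabs (Df q) + e) * Rabs (u - v).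
Proof.
  intros Iq Hq e He. destruct (step_ord q Iq Hq e He) as [r [Hr [d [Hd H]]]].
  exists r. split; auto. exists d. split; auto.
  intros g u v Hg Iu Iv Hu Hv.
  destruct (Rle_dec u v).
  - rewrite (Rabs_minus_sym u v), (Rabs_minus_sym (g u) (g v)).
    rewrite (Rabs_right (v - u)) by lra. apply H; auto.
  - rewrite (Rabs_right (u - v)) by lra. apply H; auto. lra.
Qed.

Fixpoint Afac (k : nat) : R :=
  match k with O => 1 | S m => Afac m * Rabs (Df (iter m f (f 0))) end.

Lemma If0 : I (f 0).
Proof. apply PEU_I; auto. unfold I, cI; lra. Qed.

Lemma Afac_ge1 k : 1 <= Afac k.
Proof.
  induction k; simpl. lra.
  pose proof (Df_ge (iter k f (f 0)) (iter_I f (PEU_I f Hf) k _ If0)). nra.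
Qed.

Lemma orbit_bounds k : (forall j, (j < k)%nat -> iter j f (f 0) <> 0) ->
  forall e, 0 < e -> exists r, 0 < r /\ exists d, 0 < d /\
  forall g u v, near g d -> I u -> I v -> Rabs (u - f 0) < r -> Rabs (v - f 0) < r ->
  (Afac k - e) * Rabs (u - v) <= Rabs (iter k g u - iter k g v) <= (Afac k + e) * Rabs (u - v).
Proof.
  induction k; intros Hne e He.
  - exists 1. split. lra. exists 1. split. lra. intros. simpl.
    pose proof (Rabs_pos (u - v)). nra.
  - set (q := iter k f (f 0)).
    assert (Iq : I q) by (apply (iter_I f (PEU_I f Hf) k _ If0)).
    assert (Hq : q <> 0) by (apply Hne; lia).
    set (a := Rabs (Df q)). set (b := Afac k).
    assert (Ha : lm <= a) by (apply Df_ge; auto).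
    assert (Hb : 1 <= b) by apply Afac_ge1.
    set (e1 := Rmin 1 (e / (3 * (b + 1)))).
    set (e2 := Rmin 1 (e / (3 * (a + 1)))).
    assert (He1 : 0 < e1) by (apply Rmin_glb_lt; [lra|apply Rdiv_lt_0_compat; lra]).
    assert (He2 : 0 < e2) by (apply Rmin_glb_lt; [lra|apply Rdiv_lt_0_compat; lra]).
    assert (He1a : e1 <= 1) by apply Rmin_l.
    assert (He2a : e2 <= 1) by apply Rmin_l.
    assert (He1b : b * e1 <= e / 3).
    { assert (e1 <= e / (3 * (b + 1))) by apply Rmin_r.
      assert (e / (3 * (b + 1)) * (b + 1) = e / 3) by (field; lra).
      assert (b * e1 <= (b + 1) * e1) by lra.
      assert ((b+1) * e1 <= (b + 1) * (e / (3 * (b + 1)))) by (apply Rmult_le_compat_l; lra).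
      lra. }
    assert (He2b : a * e2 <= e / 3).
    { assert (e2 <= e / (3 * (a + 1))) by apply Rmin_r.
      assert (e / (3 * (a + 1)) * (a + 1) = e / 3) by (field; lra).
      assert (a * e2 <= (a + 1) * e2) by lra.
      assert ((a+1) * e2 <= (a + 1) * (e / (3 * (a + 1)))) by (apply Rmult_le_compat_l; lra).
      lra. }
    assert (He12 : e1 * e2 <= e / 3).
    { assert (e2 <= e / (3 * (a + 1))) by apply Rmin_r.
      assert (e / (3 * (a + 1)) <= e / 3).
      { unfold Rdiv. apply Rmult_le_compat_l. lra. apply Rinv_le_contravar; lra. }
      nra. }
    destruct (step_bound q Iq Hq e1 He1) as [r1 [Hr1 [d1 [Hd1 S1]]]].
    destruct (orbit_cont k (f 0) If0 r1 Hr1) as [r' [Hr' [d' [Hd' S2]]]].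
    destruct (IHk ltac:(intros; apply Hne; lia) e2 He2) as [r2 [Hr2 [d2 [Hd2 S3]]]].
    exists (Rmin r' r2). split. apply Rmin_glb_lt; lra.
    exists (Rmin d1 (Rmin d' d2)). split. repeat apply Rmin_glb_lt; lra.
    intros g u v Hg Iu Iv Hu Hv.
    pose proof (Rmin_l r' r2). pose proof (Rmin_r r' r2).
    pose proof (Rmin_l d1 (Rmin d' d2)). pose proof (Rmin_r d1 (Rmin d' d2)).
    pose proof (Rmin_l d' d2). pose proof (Rmin_r d' d2).
    assert (Hg1 : near g d1) by (apply (near_mono g _ _ Hg); lra).
    assert (Hg2 : near g d') by (apply (near_mono g _ _ Hg); lra).
    assert (Hg3 : near g d2) by (apply (near_mono g _ _ Hg); lra).
    assert (IgI : forall x, I x -> I (g x)) by (apply PEU_I; apply Hg).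
    pose proof (S2 g u Hg2 Iu ltac:(lra)) as Au.
    pose proof (S2 g v Hg2 Iv ltac:(lra)) as Av.
    pose proof (S3 g u v Hg3 Iu Iv ltac:(lra) ltac:(lra)) as [Y1 Y2].
    pose proof (S1 g (iter k g u) (iter k g v) Hg1 (iter_I g IgI k u Iu) (iter_I g IgI k v Iv) Au Av)
      as [X1 X2].
    fold q a b in Y1, Y2, X1, X2. simpl. fold q a. change (Afac k) with b.
    set (Z := Rabs (u - v)) in *.
    set (Y := Rabs (iter k g u - iter k g v)) in *.
    set (X := Rabs (g (iter k g u) - g (iter k g v))) in *.
    assert (HZ : 0 <= Z) by apply Rabs_pos.
    assert (HY : 0 <= Y) by apply Rabs_pos.
    split.
    + assert ((a - e1) * ((b - e2) * Z) <= (a - e1) * Y) by (apply Rmult_le_compat_l; lra).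
      assert ((b * a - e) * Z <= (a - e1) * ((b - e2) * Z)).
      { apply Rle_trans with ((a * b - a * e2 - b * e1) * Z).
        - apply Rmult_le_compat_r; lra.
        - nra. }
      lra.
    + assert ((a + e1) * Y <= (a + e1) * ((b + e2) * Z)) by (apply Rmult_le_compat_l; lra).
      assert ((a + e1) * ((b + e2) * Z) <= (b * a + e) * Z).
      { replace ((a + e1) * ((b + e2) * Z)) with ((a * b + a * e2 + b * e1 + e1 * e2) * Z) by ring.
        apply Rmult_le_compat_r; lra. }
      lra.
Qed.

Lemma f0_pos : 0 < f 0.
Proof.
  destruct Hf as [_ [H1 _]].
  pose proof (mvt_low (-1) 0 f DL lm (proj1 HDL) HL (-1) 0 ltac:(lra) ltac:(lra) ltac:(lra)).
  lra.
Qed.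

Lemma l_le_A k l : (forall j, (j < k)%nat -> iter j f (f 0) <> 0) ->
  deriv_within I (iter k f) (f 0) l -> Rabs l <= Afac k.
Proof.
  intros Hne Hd. apply Rnot_lt_le. intro Hlt.
  set (e := (Rabs l - Afac k) / 4).
  assert (He : 0 < e) by (unfold e; lra).
  destruct (orbit_bounds k Hne e He) as [r [Hr [d [Hd0 Hb]]]].
  destruct (Hd e He) as [d2 [Hd2 Hdd]].
  set (t := Rmin (Rmin r d2) 1 / 2).
  assert (Ht : 0 < t) by (assert (0 < Rmin (Rmin r d2) 1) by (repeat apply Rmin_glb_lt; lra); unfold t; lra).
  assert (Ht1 : t < r /\ t < d2 /\ t <= 1/2).
  { unfold t. pose proof (Rmin_l (Rmin r d2) 1). pose proof (Rmin_r (Rmin r d2) 1).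
    pose proof (Rmin_l r d2). pose proof (Rmin_r r d2). lra. }
  pose proof If0 as I0. pose proof f0_pos.
  assert (Iy : I (f 0 - t)) by (unfold I, cI in *; lra).
  assert (Hyt : Rabs (f 0 - t - f 0) = t) by (rewrite Rabs_left; lra).
  specialize (Hdd (f 0 - t) Iy ltac:(lra)). rewrite Hyt in Hdd.
  destruct (Hb f (f 0 - t) (f 0) (near_self d Hd0) Iy I0 ltac:(lra)
    ltac:(rewrite Rminus_diag, Rabs_R0; lra)) as [_ U].
  rewrite Hyt in U.
  assert (Rabs (l * (f 0 - t - f 0)) = Rabs l * t) by (rewrite Rabs_mult, Hyt; auto).
  pose proof (Rabs_triang (iter k f (f 0 - t) - iter k f (f 0) - l * (f 0 - t - f 0))
              (- (iter k f (f 0 - t) - iter k f (f 0)))).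
  rewrite Rabs_Ropp in H1.
  replace (iter k f (f 0 - t) - iter k f (f 0) - l * (f 0 - t - f 0) +
      - (iter k f (f 0 - t) - iter k f (f 0))) with (- (l * (f 0 - t - f 0))) in H1 by ring.
  rewrite Rabs_Ropp, H0 in H1.
  unfold e in *. nra.
Qed.

Lemma zero_bound e : 0 < e -> exists r, 0 < r /\ exists d, 0 < d /\
  forall g h, near g d -> 0 < h -> h < r -> h <= 1 ->
  (Rabs (DR 0) - e) * h <= Rabs (g h - g 0) /\ (Rabs (DL 0) - e) * h <= Rabs (g 0 - g (-h)).
Proof.
  intros He.
  destruct (proj2 HDL 0 ltac:(unfold cI; lra) (e/2) ltac:(lra)) as [r1 [Hr1 Hc1]].
  destruct (proj2 HDR 0 ltac:(unfold cI; lra) (e/2) ltac:(lra)) as [r2 [Hr2 Hc2]].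
  exists (Rmin r1 r2). split. apply Rmin_glb_lt; lra.
  exists (e/2). split. lra.
  intros g h [_ [DLg [DRg [G1 [G3 [_ [G2 G4]]]]]]] Hh Hhr Hh1.
  pose proof (Rmin_l r1 r2). pose proof (Rmin_r r1 r2).
  split.
  - assert (K := abs_bound (DR 0) e (h - 0) (g h - g 0)).
    rewrite Rminus_0_r in K. apply K; try lra.
    assert (M : (DR 0 - e) * (h - 0) <= g h - g 0 <= (DR 0 + e) * (h - 0)).
    2:{ rewrite Rminus_0_r in M. exact M. }
    apply (mvt_two 0 1 g DRg); try apply G3; try lra.
    intros x Hx. assert (cI 0 1 x) by (unfold cI; lra).
    specialize (G4 x H1). assert (Rabs (x - 0) < r2) by (split_Rabs; lra).
    specialize (Hc2 x H1 H2). split_Rabs; lra.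
  - assert (K := abs_bound (DL 0) e (0 - - h) (g 0 - g (-h))).
    replace (0 - - h) with h in K by ring. apply K; try lra.
    assert (M : (DL 0 - e) * (0 - - h) <= g 0 - g (-h) <= (DL 0 + e) * (0 - - h)).
    2:{ replace (0 - - h) with h in M by ring. exact M. }
    apply (mvt_two (-1) 0 g DLg); try apply G1; try lra.
    intros x Hx. assert (cI (-1) 0 x) by (unfold cI; lra).
    specialize (G2 x H1). assert (Rabs (x - 0) < r1) by (split_Rabs; lra).
    specialize (Hc1 x H1 H2). split_Rabs; lra.
Qed.

Lemma near_expd g d : near g d -> d <= (lm - 1) / 2 -> Expd g ((1 + lm) / 2).
Proof.
  intros [_ [DLg [DRg [G1 [G2 [_ [G3 G4]]]]]]] Hd.
  exists DLg, DRg. refine (conj G1 (conj G2 (conj _ _))).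
  - intros x Hx. specialize (G3 x Hx). specialize (HL x Hx). split_Rabs; lra.
  - intros x Hx. specialize (G4 x Hx). specialize (HR x Hx). split_Rabs; lra.
Qed.

Lemma stable_common g eps kap P d :
  near g d -> d <= (lm - 1) / 2 -> 0 < eps -> 1 < kap ->
  (forall j, (1 <= j)%nat -> (j < P)%nat -> iter j g 0 = 0 \/ eps < Rabs (iter j g 0)) ->
  (forall h e, 0 < h -> h <= eps -> (e = h \/ e = -h) -> I e ->
    (forall j, (j < P)%nat -> samehalf (iter j g 0) (iter j g e)) ->
    2 * kap * h <= Rabs (iter P g 0 - iter P g e)) ->
  expansive eps g.
Proof.
  intros Hg Hd Heps Hkap HA HB.
  pose proof (near_expd g d Hg Hd) as Ex.
  apply (core_expansive g ((1 + lm) / 2) eps kap P); auto.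
  - apply PEU_I; apply Hg.
  - apply (expd_IVT g _ Ex).
  - apply (expd_HE g _ Ex). lra.
  - lra.
Qed.

Lemma stable_part : good f -> exists eps, 0 < eps /\ stably_expansive eps f.
Proof.
  intros [Hnp | [p [Hp2 [Hpp [Hpk [DL' [DR' [l [HDL' [HDR' [Hdl Hgood]]]]]]]]]]].
  -
    set (lm' := (1 + lm) / 2).
    assert (Hlm' : 1 < lm') by (unfold lm'; lra).
    destruct (pow_big lm' 1 4 Hlm' Rlt_0_1) as [P HP].
    destruct (finite_eps (fun j => iter j f 0) P) as [eps0 [Heps0 HA0]].
    destruct (orbit_unif P (eps0 / 2) ltac:(lra)) as [d [Hd Hu]].
    exists (eps0 / 2). split. lra.
    exists (Rmin d ((lm - 1) / 2)). split. apply Rmin_glb_lt; lra.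
    intros g Hg HB1.
    pose proof (B1_near g _ Hg HB1) as Hn.
    pose proof (Rmin_l d ((lm - 1) / 2)). pose proof (Rmin_r d ((lm - 1) / 2)).
    apply (stable_common g (eps0 / 2) 2 P (Rmin d ((lm - 1) / 2))); auto; try lra.
    + intros j Hj1 Hj2. right.
      destruct (HA0 j Hj2) as [K|K]. { exfalso. apply Hnp. exists j. auto. }
      pose proof (Hu g (near_mono g _ _ Hn H) j Hj2). simpl in K.
      split_Rabs; lra.
    + pose proof (near_expd g _ Hn H0) as Ex.
      apply (HB_lam g lm' (eps0 / 2) 2 P). apply PEU_I; auto.
      apply (expd_HE g _ Ex). lra. lra. lra.
  -
    set (k := (p - 1)%nat).
    assert (Hpk' : p = S k) by (unfold k; lia).
    assert (Hne : forall j, (j < k)%nat -> iter j f (f 0) <> 0).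
    { intros j Hj. rewrite <- iter_succ_r. apply Hpk; lia. }
    assert (HA : Rabs l <= Afac k) by (apply l_le_A; auto).
    assert (E0 : DL' 0 = DL 0) by (apply (C1_unique (-1) 0 f); auto; [lra|unfold cI; lra]).
    assert (E1 : DR' 0 = DR 0) by (apply (C1_unique 0 1 f); auto; [lra|unfold cI; lra]).
    rewrite E0, E1 in Hgood.
    set (A := Afac k) in *.
    set (m0 := Rmin (Rabs (DR 0)) (Rabs (DL 0))) in *.
    assert (HAg : 1 <= A) by apply Afac_ge1.
    assert (Hm0 : 1 < m0).
    { unfold m0. apply Rmin_glb_lt.
      - specialize (HR 0 ltac:(unfold cI; lra)). rewrite Rabs_left; lra.
      - specialize (HL 0 ltac:(unfold cI; lra)). rewrite Rabs_right; lra. }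
    assert (HAm : 2 < A * m0) by nra.
    set (mu := (A * m0 - 2) / 2).
    assert (Hmu : 0 < mu) by (unfold mu; lra).
    set (e1 := Rmin 1 (mu / (2 * (m0 + 1)))).
    set (e2 := Rmin 1 (mu / (2 * (A + 1)))).
    assert (He1 : 0 < e1) by (apply Rmin_glb_lt; [lra|apply Rdiv_lt_0_compat; lra]).
    assert (He2 : 0 < e2) by (apply Rmin_glb_lt; [lra|apply Rdiv_lt_0_compat; lra]).
    assert (He1a : e1 <= 1) by apply Rmin_l.
    assert (He2a : e2 <= 1) by apply Rmin_l.
    assert (He1b : m0 * e1 <= mu / 2).
    { assert (e1 <= mu / (2 * (m0 + 1))) by apply Rmin_r.
      assert (mu / (2 * (m0 + 1)) * (m0 + 1) = mu / 2) by (field; lra).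
      assert ((m0+1) * e1 <= (m0 + 1) * (mu / (2 * (m0 + 1)))) by (apply Rmult_le_compat_l; lra).
      nra. }
    assert (He2b : A * e2 <= mu / 2).
    { assert (e2 <= mu / (2 * (A + 1))) by apply Rmin_r.
      assert (mu / (2 * (A + 1)) * (A + 1) = mu / 2) by (field; lra).
      assert ((A+1) * e2 <= (A + 1) * (mu / (2 * (A + 1)))) by (apply Rmult_le_compat_l; lra).
      nra. }
    destruct (orbit_bounds k Hne e1 He1) as [r1 [Hr1 [d1 [Hd1 S1]]]].
    destruct (zero_bound e2 He2) as [r0 [Hr0 [d0 [Hd0 S0]]]].
    assert (I0 : I 0) by (unfold I, cI; lra).
    destruct (orbit_cont 1 0 I0 r1 Hr1) as [r' [Hr' [d' [Hd' S2]]]].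
    destruct (finite_eps (fun j => iter j f 0) p) as [eps0 [Heps0 HA0]].
    destruct (orbit_unif p (eps0 / 2) ltac:(lra)) as [d3 [Hd3 Hu]].
    set (eps := Rmin (eps0 / 2) (Rmin r0 (Rmin r' 1) / 2)).
    assert (Hm1 : 0 < Rmin r0 (Rmin r' 1)) by (repeat apply Rmin_glb_lt; lra).
    assert (Heps : 0 < eps) by (apply Rmin_glb_lt; lra).
    assert (Heps1 : eps <= eps0 / 2) by apply Rmin_l.
    assert (Heps2 : eps < r0 /\ eps < r' /\ eps < 1).
    { assert (eps <= Rmin r0 (Rmin r' 1) / 2) by apply Rmin_r.
      pose proof (Rmin_l r0 (Rmin r' 1)). pose proof (Rmin_r r0 (Rmin r' 1)).
      pose proof (Rmin_l r' 1). pose proof (Rmin_r r' 1). lra. }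
    set (dt := Rmin (Rmin d1 d0) (Rmin (Rmin d' d3) ((lm - 1) / 2))).
    assert (Hdt : 0 < dt) by (repeat apply Rmin_glb_lt; lra).
    assert (Hdts : dt <= d1 /\ dt <= d0 /\ dt <= d' /\ dt <= d3 /\ dt <= (lm - 1) / 2).
    { unfold dt. pose proof (Rmin_l (Rmin d1 d0) (Rmin (Rmin d' d3) ((lm - 1) / 2))).
      pose proof (Rmin_r (Rmin d1 d0) (Rmin (Rmin d' d3) ((lm - 1) / 2))).
      pose proof (Rmin_l d1 d0). pose proof (Rmin_r d1 d0).
      pose proof (Rmin_l (Rmin d' d3) ((lm - 1) / 2)). pose proof (Rmin_r (Rmin d' d3) ((lm - 1) / 2)).
      pose proof (Rmin_l d' d3). pose proof (Rmin_r d' d3). lra. }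
    exists eps. split; auto. exists dt. split; auto.
    intros g Hg HB1.
    pose proof (B1_near g _ Hg HB1) as Hn.
    destruct Hdts as [T1 [T2 [T3 [T4 T5]]]].
    apply (stable_common g eps ((A * m0 + 2) / 4) p dt); auto; try lra.
    + intros j Hj1 Hj2. right.
      destruct (HA0 j Hj2) as [K|K]. { exfalso. apply (Hpk j); auto. }
      pose proof (Hu g (near_mono g _ _ Hn T4) j Hj2). simpl in K.
      split_Rabs; lra.
    + intros h e Hh Hhe He Ie _.
      assert (IgI : forall x, I x -> I (g x)) by (apply PEU_I; auto).
      rewrite Hpk', !iter_succ_r.
      assert (Hge : Rabs (g e - f 0) < r1).
      { apply (S2 g e (near_mono g _ _ Hn T3) Ie). destruct He as [He|He]; rewrite He; split_Rabs; lra. }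
      assert (Hg0 : Rabs (g 0 - f 0) < r1).
      { apply (S2 g 0 (near_mono g _ _ Hn T3) I0). rewrite Rminus_diag, Rabs_R0; lra. }
      destruct (S1 g (g 0) (g e) (near_mono g _ _ Hn T1) (IgI 0 I0) (IgI e Ie) Hg0 Hge) as [L1 _].
      assert (L2 : (m0 - e2) * h <= Rabs (g 0 - g e)).
      { destruct (S0 g h (near_mono g _ _ Hn T2) Hh ltac:(lra) ltac:(lra)) as [Z1 Z2].
        pose proof (Rmin_l (Rabs (DR 0)) (Rabs (DL 0))).
        pose proof (Rmin_r (Rabs (DR 0)) (Rabs (DL 0))).
        fold m0 in H, H0.
        destruct He; subst e.
        - rewrite Rabs_minus_sym. nra.
        - nra. }
      fold A in L1.
      assert (0 <= A - e1) by lra.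
      assert ((A - e1) * ((m0 - e2) * h) <= (A - e1) * Rabs (g 0 - g e)) by (apply Rmult_le_compat_l; lra).
      assert (2 * ((A * m0 + 2) / 4) * h <= (A - e1) * ((m0 - e2) * h)).
      { apply Rle_trans with ((A * m0 - A * e2 - m0 * e1) * h).
        - apply Rmult_le_compat_r; unfold mu in *; lra.
        - replace ((A - e1) * ((m0 - e2) * h)) with ((A*m0 - A*e2 - m0*e1)*h + e1*e2*h) by ring. assert (0 <= e1*e2*h) by (apply Rmult_le_pos; [apply Rmult_le_pos|]; lra). lra. }
      lra.
Qed.

End Stable.


Theorem proposition2p1 (f : R -> R) (hf : PEU f) :
  (exists eps, 0 < eps /\ expansive eps f) /\
  (good f -> exists eps, 0 < eps /\ stably_expansive eps f).
Proof.
  split.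
  - apply part1; auto.
  - intros Hg.
    destruct (PEU_expd f hf) as [lm [Hlm [DL [DR [HDL [HDR [HL HR]]]]]]].
    apply (stable_part f DL DR lm hf HDL HDR HL HR Hlm Hg).
Qed.
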